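(* For every subclass $\mathbf{X}$ of the class $\mathbf{M}$ of all metric spaces, the following are equivalent: (i) $\mathbf{X}\subseteq\mathbf{Dis}$, there exists $(Y,\rho)\in\mathbf{X}$ with $\operatorname{card}(Y)\geqslant 2$, and $\mathbf{Dis}_{X_1}\subseteq\mathbf{X}$ for every $(X_1,d_1)\in\mathbf{X}$; (ii) $\mathbf{P}_{\mathbf{X}}=\mathbf{Am}$.
   Context: All metric spaces are assumed to have nonempty underlying sets; $\mathbf{M}$ is the class of all metric spaces. A metric $d$ on $X$ is discrete if there is $k\in(0,\infty)$ with $d(x,y)=k$ for all distinct $x,y\in X$; $\mathbf{Dis}$ is the class of all metric spaces with discrete metric, and for a nonempty set $X_1$, $\mathbf{Dis}_{X_1}$ is the class of all metric spaces $(X_1,d)$ with $d$ a discrete metric on $X_1$. $\mathbf{F}$ is the set of all functions $f:[0,\infty)\to[0,\infty)$; $f\in\mathbf{F}$ is amenable if $f^{-1}(0)=\{0\}$, and $\mathbf{Am}$ is the set of all amenable $f\in\mathbf{F}$. For a class $\mathbf{X}$ of metric spaces, $\mathbf{P}_{\mathbf{X}}$ denotes the set of all $f\in\mathbf{F}$ such that for every metric space $(X,d)$, if $(X,d)\in\mathbf{X}$ then $(X,f\circ d)\in\mathbf{X}$ (where $f\circ d(x,y)=f(d(x,y))$; membership requires $f\circ d$ to be a metric). *)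

(* Defs.v *)
From Stdlib Require Import Reals.
Open Scope R_scope.

Definition is_metric {T : Type} (d : T -> T -> R) : Prop :=
  (forall x y, 0 <= d x y) /\
  (forall x y, d x y = 0 <-> x = y) /\
  (forall x y, d x y = d y x) /\
  (forall x y z, d x z <= d x y + d y z).

(* A class of metric-space candidates: a predicate on pairs (T, d). *)
Definition MClass : Type := forall T : Type, (T -> T -> R) -> Prop.

Definition M : MClass := fun T d => inhabited T /\ is_metric d.

Definition subclass (X Y : MClass) : Prop :=
  forall (T : Type) (d : T -> T -> R), X T d -> Y T d.

Definition is_discrete_metric {T : Type} (d : T -> T -> R) : Prop :=
  is_metric d /\ exists k, 0 < k /\ forall x y, x <> y -> d x y = k.

Definition Dis : MClass := fun T d => inhabited T /\ is_discrete_metric d.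

Definition Dis_on (X1 : Type) : MClass :=
  fun T d => exists e : T = X1, inhabited T /\ is_discrete_metric d.

(* F : functions [0,oo) -> [0,oo), represented by f : R -> R whose values
   on [0,oo) are in [0,oo) (values on negatives are irrelevant). *)
Definition inF (f : R -> R) : Prop := forall t, 0 <= t -> 0 <= f t.

Definition Am (f : R -> R) : Prop :=
  inF f /\ forall t, 0 <= t -> (f t = 0 <-> t = 0).

Definition P (X : MClass) (f : R -> R) : Prop :=
  inF f /\ forall (T : Type) (d : T -> T -> R),
    X T d -> X T (fun x y => f (d x y)).

(* Main.v *)
Require Import Defs.
From Stdlib Require Import Reals Lra Classical ClassicalEpsilon FunctionalExtensionality.
Open Scope R_scope.

Definition dmet {T : Type} (t : R) : T -> T -> R :=
  fun x y => if excluded_middle_informative (x = y) then 0 else t.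

Lemma dmet_disc {T : Type} (t : R) : 0 < t -> is_discrete_metric (@dmet T t).
Proof.
  intro Ht. unfold dmet. split.
  - split; [|split; [|split]].
    + intros x y. destruct (excluded_middle_informative (x = y)); lra.
    + intros x y. destruct (excluded_middle_informative (x = y)); split; intro; auto; try lra; contradiction.
    + intros x y. destruct (excluded_middle_informative (x = y)), (excluded_middle_informative (y = x)); auto; subst; congruence.
    + intros x y z. destruct (excluded_middle_informative (x = z)), (excluded_middle_informative (x = y)),
        (excluded_middle_informative (y = z)); subst; try lra; congruence.
  - exists t. split; auto. intros x y H. destruct (excluded_middle_informative (x = y)); tauto.
Qed.

Definition fp (p : R) (t : R) : R :=
  if Req_dec_T t 0 then 0 else if Req_dec_T t p then 3 else 1.

Lemma fp_Am p : Am (fp p).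
Proof.
  unfold fp. split.
  - intros t _. destruct (Req_dec_T t 0); [lra|]. destruct (Req_dec_T t p); lra.
  - intros t _. destruct (Req_dec_T t 0); split; intro; auto; try lra.
    destruct (Req_dec_T t p); lra.
Qed.

Theorem mainTheorem4 (X : MClass) (HX : subclass X M) :
  (subclass X Dis /\
   (exists (Y : Type) (rho : Y -> Y -> R), X Y rho /\ exists y1 y2 : Y, y1 <> y2) /\
   (forall (X1 : Type) (d1 : X1 -> X1 -> R), X X1 d1 -> subclass (Dis_on X1) X))
  <->
  (forall f : R -> R, inF f -> (P X f <-> Am f)).
Proof.
  split.
  - intros [HD [[Y [rho [HY [y1 [y2 Hy]]]]] HS]] f Hf. split.
    + intros [_ HP]. split; auto. intros t Ht.
      assert (H0 : f 0 = 0).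
      { destruct (HX _ _ (HP _ _ HY)) as [_ [_ [Hz _]]].
        destruct (HD _ _ HY) as [_ [[_ [Hr _]] _]].
        assert (E : rho y1 y1 = 0) by (apply Hr; auto).
        replace (f 0) with (f (rho y1 y1)) by (rewrite E; auto). apply Hz; auto. }
      split; intro E; [|subst; auto].
      destruct (Req_dec_T t 0) as [|Hn]; auto. exfalso.
      assert (Htp : 0 < t) by lra.
      assert (HXd : X Y (@dmet Y t)).
      { apply (HS Y rho HY). exists eq_refl. split; [exact (inhabits y1)|]. apply dmet_disc; auto. }
      destruct (HX _ _ (HP _ _ HXd)) as [_ [_ [Hz _]]].
      apply Hy. apply (Hz y1 y2). unfold dmet.
      destruct (excluded_middle_informative (y1 = y2)); auto.
    + intros [_ HA]. split; auto. intros T d HT.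
      destruct (HD _ _ HT) as [Hi [[Hnn [Hr [Hsym Htri]]] [k [Hk Hkd]]]].
      apply (HS T d HT). exists eq_refl. split; auto.
      assert (Hf0 : f 0 = 0) by (apply HA; lra).
      assert (Hfk : 0 < f k).
      { destruct (Req_dec_T (f k) 0) as [E|E].
        - apply (proj1 (HA k ltac:(lra))) in E; lra.
        - pose proof (Hf k ltac:(lra)); lra. }
      assert (Hv : forall x y, f (d x y) = if excluded_middle_informative (x = y) then 0 else f k).
      { intros x y. destruct (excluded_middle_informative (x = y)).
        - subst. rewrite (proj2 (Hr y y) eq_refl). auto.
        - rewrite Hkd; auto. }
      split; [split; [|split; [|split]]|].
      * intros x y. rewrite Hv. destruct (excluded_middle_informative (x = y)); lra.
      * intros x y. rewrite Hv. destruct (excluded_middle_informative (x = y)); split; intro; auto; try lra; contradiction.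
      * intros x y. rewrite Hsym. auto.
      * intros x y z. rewrite !Hv. destruct (excluded_middle_informative (x = z)), (excluded_middle_informative (x = y)),
        (excluded_middle_informative (y = z)); subst; try lra; congruence.
      * exists (f k). split; auto. intros x y H. rewrite Hkd; auto.
  - intros H.
    assert (HD : subclass X Dis).
    { intros T d HT. destruct (HX _ _ HT) as [Hi [Hnn [Hr [Hsym Htri]]]].
      assert (L : forall x y z, x <> z -> d x z = d x y \/ d x z = d y z).
      { intros x y z Hxz.
        destruct (proj2 (H (fp (d x z)) (proj1 (fp_Am _))) (fp_Am _)) as [_ HP].
        destruct (HX _ _ (HP _ _ HT)) as [_ [_ [_ [_ Ht]]]].
        specialize (Ht x y z). simpl in Ht. unfold fp in Ht.
        assert (d x z <> 0) by (intro E; apply Hxz; apply Hr; auto).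
        destruct (Req_dec_T (d x z) 0); [contradiction|].
        destruct (Req_dec_T (d x z) (d x z)); [|congruence].
        destruct (Req_dec_T (d x y) 0), (Req_dec_T (d x y) (d x z)), (Req_dec_T (d y z) 0), (Req_dec_T (d y z) (d x z));
          auto; lra. }
      assert (St : forall x y z, x <> y -> x <> z -> d x y = d x z).
      { intros x y z Hxy Hxz. destruct (classic (y = z)); [subst; auto|].
        destruct (L x z y Hxy) as [|E1]; auto.
        destruct (L x y z Hxz) as [E2|E2]; auto.
        rewrite E1, E2, Hsym; auto. }
      split; auto. split; [split; auto|].
      destruct (classic (exists x y : T, x <> y)) as [[x [y Hxy]]|Hn].
      - exists (d x y). split.
        + destruct (Req_dec_T (d x y) 0) as [E|E]; [apply Hr in E; contradiction|].
          pose proof (Hnn x y); lra.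
        + intros u v Huv. destruct (classic (x = u)) as [<-|Hxu].
          * symmetry. apply St; auto.
          * rewrite (St x y u Hxy Hxu), (Hsym x u). apply St; auto.
      - exists 1. split; [lra|]. intros u v Huv. exfalso. apply Hn; eauto. }
    split; [exact HD|split].
    + assert (Hz : ~ P X (fun _ => 0)).
      { intro HP. destruct (proj1 (H _ (fun _ _ => Rle_refl 0)) HP) as [_ HA]. assert (1 = 0) by (apply (proj1 (HA 1 ltac:(lra))); reflexivity). lra. }
      apply NNPP. intro Hn. apply Hz. split; [intros t _; apply Rle_refl|].
      intros T d HT. replace (fun _ _ : T => 0) with d; auto.
      apply functional_extensionality; intro x; apply functional_extensionality; intro y.
      destruct (HX _ _ HT) as [_ [_ [Hr _]]]. apply Hr.
      apply NNPP; intro Hxy. apply Hn. exists T, d. split; auto. eauto.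
    + intros X1 d1 H1 T d [e [Hi [Hm [k [Hk Hkd]]]]]. subst T.
      destruct (HD _ _ H1) as [_ [[_ [Hr1 _]] [k1 [Hk1 Hkd1]]]].
      set (f := fun t => k / k1 * t).
      assert (Hc : 0 < k / k1) by (apply Rdiv_lt_0_compat; auto).
      assert (HAm : Am f).
      { split.
        - intros t Ht. unfold f. apply Rmult_le_pos; lra.
        - intros t _. unfold f. split; intro E; [|subst; ring].
          apply Rmult_integral in E. destruct E; auto; lra. }
      destruct (proj2 (H f (proj1 HAm)) HAm) as [_ HP].
      replace d with (fun x y => f (d1 x y)); auto.
      apply functional_extensionality; intro x; apply functional_extensionality; intro y.
      destruct Hm as [_ [Hr _]]. unfold f.
      destruct (classic (x = y)) as [<-|Hxy].
      * rewrite (proj2 (Hr1 x x) eq_refl), (proj2 (Hr x x) eq_refl). ring.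
      * rewrite Hkd1, Hkd; auto. field. lra.
Qed.
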